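(* Let $K=\mathrm{SU}(2)$ and $\mathcal{M}=\{(g_1,h_1,g_2,h_2)\in K^4:[g_1,h_1][g_2,h_2]=I\}/K$. The subset $$\{(g,h,khk^{-1},kgk^{-1})\in K^4 : [g,h]=-I,\ k^2=-I\}/K$$ of $\mathcal{M}$ is homeomorphic to $\mathbb{P}^2(\mathbb{R})$.
   Context: $[a,b]=aba^{-1}b^{-1}$; $K$ acts by simultaneous conjugation and $\mathcal{M}$ carries the quotient topology. *)

(* Defs.v *)
From HB Require Import structures.
From mathcomp Require Import all_boot all_order all_algebra.
From mathcomp Require Import all_classical all_reals all_analysis.
From mathcomp Require Import complex.
Import numFieldNormedType.Exports.
Import Order.TTheory GRing.Theory Num.Theory.

Set Implicit Arguments.
Unset Strict Implicit.
Unset Printing Implicit Defensive.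

Local Open Scope classical_set_scope.
Local Open Scope ring_scope.

Notation cpx := complex.complex.

Definition cpx_to_pair (R : realType) (z : cpx R) : R * R :=
  (complex.Re z, complex.Im z).

HB.instance Definition _ (R : realType) :=
  Topological.copy (cpx R) (initial_topology (@cpx_to_pair R)).

Section QuotientSpace.
Context {X : topologicalType} (r : X -> X -> Prop).

Definition qspace := {A : set X | exists x, A = [set y | r x y]}.

Definition qpi (x : X) : qspace :=
  exist _ [set y | r x y] (ex_intro _ x erefl).

HB.instance Definition _ := gen_eqMixin qspace.
HB.instance Definition _ := gen_choiceMixin qspace.

Definition qspace_open (U : set qspace) := open (qpi @^-1` U).

Lemma qspace_openT : qspace_open [set: qspace].
Proof. by rewrite /qspace_open preimage_setT; exact: openT. Qed.

Lemma qspace_openI : setI_closed qspace_open.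
Proof. by move=> ? ? ? ?; exact: openI. Qed.

Lemma qspace_open_bigU (I : Type) (f : I -> set qspace) :
  (forall i, qspace_open (f i)) -> qspace_open (\bigcup_i f i).
Proof. by move=> ofi; apply: bigcup_open => i _; exact: ofi. Qed.

HB.instance Definition _ :=
  @isOpenTopological.Build qspace qspace_open
    qspace_openT qspace_openI qspace_open_bigU.

End QuotientSpace.

Definition homeomorphic (X Y : topologicalType) : Prop :=
  exists (f : X -> Y) (g : Y -> X),
    [/\ cancel f g, cancel g f, continuous f & continuous g].

Section SU2.
Variable R : realType.

Local Notation M2 := 'M[cpx R]_2.

Definition conjT (A : M2) : M2 := (map_mx (@complex.conjc R) A)^T.

Definition SU2_set : set M2 := [set A | A *m conjT A = 1 /\ \det A = 1].
Definition SU2 := set_type SU2_set.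

Definition commut (a b : M2) : M2 := a * b * a^-1 * b^-1.

Definition K4 := (SU2 * SU2 * SU2 * SU2)%type.

Definition g1 (x : K4) : M2 := set_val x.1.1.1.
Definition h1 (x : K4) : M2 := set_val x.1.1.2.
Definition g2 (x : K4) : M2 := set_val x.1.2.
Definition h2 (x : K4) : M2 := set_val x.2.

Definition Hom_set : set K4 :=
  [set x | commut (g1 x) (h1 x) * commut (g2 x) (h2 x) = 1].
Definition Hom := set_type Hom_set.

Definition conj_rel (x y : Hom) : Prop :=
  exists k : SU2, let kk := set_val k in
    [/\ g1 (set_val y) = kk * g1 (set_val x) * kk^-1,
        h1 (set_val y) = kk * h1 (set_val x) * kk^-1,
        g2 (set_val y) = kk * g2 (set_val x) * kk^-1 &
        h2 (set_val y) = kk * h2 (set_val x) * kk^-1].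

Definition Moduli := qspace conj_rel.

Definition special_set : set K4 :=
  [set x | exists k : SU2, let kk := set_val k in
     [/\ commut (g1 x) (h1 x) = -1, kk * kk = -1,
         g2 x = kk * h1 x * kk^-1 & h2 x = kk * g1 x * kk^-1]].

Definition special_image : set Moduli :=
  [set q | exists x : Hom, special_set (set_val x) /\ q = qpi conj_rel x].

Definition SpecialSubspace := set_type special_image.

End SU2.

Section RP2.
Variable R : realType.

Definition S2_set : set 'rV[R]_3 := [set v | \sum_(i < 3) v 0 i ^+ 2 = 1].
Definition S2 := set_type S2_set.

Definition antipodal_rel (x y : S2) : Prop :=
  set_val y = set_val x \/ set_val y = - set_val x.

Definition RP2 := qspace antipodal_rel.
End RP2.

(* Main.v *)
From HB Require Import structures.
Require Import Defs.
From mathcomp Require Import all_boot all_order all_algebra.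
From mathcomp Require Import all_classical all_reals all_analysis.
From mathcomp Require Import complex ring lra.
Import numFieldNormedType.Exports.
Import Order.TTheory GRing.Theory Num.Theory.
Set Implicit Arguments.
Unset Strict Implicit.
Unset Printing Implicit Defensive.
Local Open Scope classical_set_scope.
Local Open Scope ring_scope.

Section Q.
Variable R : realType.
Local Notation C := (cpx R).
Local Notation M2 := 'M[cpx R]_2.
Local Open Scope complex_scope.

Lemma cmulE (a b c d : R) : (a +i* b) * (c +i* d) = (a*c - b*d) +i* (a*d + b*c) :> C.
Proof. by []. Qed.
Lemma caddE (a b c d : R) : (a +i* b) + (c +i* d) = (a + c) +i* (b + d) :> C.
Proof. by []. Qed.
Lemma coppE (a b : R) : - (a +i* b) = (- a) +i* (- b) :> C.
Proof. by []. Qed.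
Lemma c0E : 0 = (0 +i* 0) :> C. Proof. by []. Qed.
Lemma c1E : 1 = (1 +i* 0) :> C. Proof. by []. Qed.
Lemma cconjE (a b : R) : complex.conjc (a +i* b) = a +i* (- b). Proof. by []. Qed.

Definition Mq (a b c d : R) : M2 :=
  \matrix_(i < 2, j < 2)
    if i == 0 then (if j == 0 then a +i* b else c +i* d)
    else (if j == 0 then (- c) +i* d else a +i* (- b)).

Definition qn (a b c d : R) := a^+2 + b^+2 + c^+2 + d^+2.

Lemma MqM a1 b1 c1 d1 a2 b2 c2 d2 :
  Mq a1 b1 c1 d1 * Mq a2 b2 c2 d2 =
  Mq (a1*a2 - b1*b2 - c1*c2 - d1*d2) (a1*b2 + b1*a2 + c1*d2 - d1*c2)
     (a1*c2 - b1*d2 + c1*a2 + d1*b2) (a1*d2 + b1*c2 - c1*b2 + d1*a2).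
Proof.
apply/matrixP => i j; rewrite !mxE !big_ord_recl big_ord0 !mxE /=.
case: i => [[|[|//]] Hi]; case: j => [[|[|//]] Hj] /=;
rewrite !cmulE !caddE; congr (_ +i* _); ring.
Qed.

Lemma MqD a1 b1 c1 d1 a2 b2 c2 d2 :
  Mq a1 b1 c1 d1 + Mq a2 b2 c2 d2 = Mq (a1+a2) (b1+b2) (c1+c2) (d1+d2).
Proof.
apply/matrixP => i j; rewrite !mxE /=.
case: i => [[|[|//]] Hi]; case: j => [[|[|//]] Hj] /=;
rewrite !caddE; congr (_ +i* _); ring.
Qed.

Lemma MqN a b c d : - Mq a b c d = Mq (-a) (-b) (-c) (-d).
Proof.
apply/matrixP => i j; rewrite !mxE /=.
case: i => [[|[|//]] Hi]; case: j => [[|[|//]] Hj] /=;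
rewrite !coppE; congr (_ +i* _); ring.
Qed.

Lemma MqB a1 b1 c1 d1 a2 b2 c2 d2 :
  Mq a1 b1 c1 d1 - Mq a2 b2 c2 d2 = Mq (a1-a2) (b1-b2) (c1-c2) (d1-d2).
Proof. by rewrite MqN MqD. Qed.

Lemma Mq1 : Mq 1 0 0 0 = 1.
Proof.
apply/matrixP => i j; rewrite !mxE /=.
case: i => [[|[|//]] Hi]; case: j => [[|[|//]] Hj] //=; rewrite ?oppr0 //.
Qed.

Lemma Mq0 : Mq 0 0 0 0 = 0.
Proof.
apply/matrixP => i j; rewrite !mxE /=.
case: i => [[|[|//]] Hi]; case: j => [[|[|//]] Hj] //=; rewrite ?oppr0 //.
Qed.

Lemma MqZ t a b c d : Mq (t*a) (t*b) (t*c) (t*d) = (t +i* 0) *: Mq a b c d.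
Proof.
apply/matrixP => i j; rewrite !mxE /=.
case: i => [[|[|//]] Hi]; case: j => [[|[|//]] Hj] /=;
rewrite cmulE; congr (_ +i* _); ring.
Qed.

Lemma Mq_inj a b c d a' b' c' d' : Mq a b c d = Mq a' b' c' d' ->
  [/\ a = a', b = b', c = c' & d = d'].
Proof.
move/matrixP => H; move: (H 0 0) (H 0 1); rewrite !mxE /=.
by case=> -> -> [] -> ->.
Qed.

Lemma sum2 (F : 'I_2 -> C) : \sum_(i < 2) F i = F 0 + F 1.
Proof. by rewrite !big_ord_recl big_ord0 addr0; congr (_ + F _); apply: val_inj. Qed.

Lemma det2 (A : M2) : \det A = A 0 0 * A 1 1 - A 0 1 * A 1 0.
Proof.
rewrite (expand_det_row _ 0) !big_ord_recl big_ord0 /cofactor !det_mx11 !mxE /=.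
rewrite expr0 expr1 mul1r addr0 mulN1r mulrN.
by congr (A _ _ * A _ _ - A _ _ * A _ _); apply: val_inj.
Qed.

Lemma detMq a b c d : \det (Mq a b c d) = (qn a b c d) +i* 0.
Proof.
rewrite det2 !mxE /= !cmulE !caddE /qn; congr (_ +i* _); ring.
Qed.

Lemma conjTMq a b c d : conjT (Mq a b c d) = Mq a (-b) (-c) (-d).
Proof.
apply/matrixP => i j; rewrite !mxE /=.
case: i => [[|[|//]] Hi]; case: j => [[|[|//]] Hj] /=.
all: by rewrite ?opprK.
Qed.

Lemma MqMconj a b c d :
  Mq a b c d * Mq a (-b) (-c) (-d) = Mq (qn a b c d) 0 0 0.
Proof. rewrite MqM /qn; congr Mq; ring. Qed.
Lemma MqconjM a b c d :
  Mq a (-b) (-c) (-d) * Mq a b c d = Mq (qn a b c d) 0 0 0.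
Proof. rewrite MqM /qn; congr Mq; ring. Qed.

Lemma Mq_SU2 a b c d : qn a b c d = 1 -> SU2_set (Mq a b c d).
Proof.
move=> h; split; last by rewrite detMq h.
by rewrite conjTMq mulmxE MqMconj h Mq1.
Qed.

Lemma su2_aux (p q r s : C) :
  p * complex.conjc p + q * complex.conjc q = 1 ->
  r * complex.conjc p + s * complex.conjc q = 0 -> p * s - q * r = 1 ->
  s = complex.conjc p /\ r = - complex.conjc q.
Proof.
move: (complex.conjc p) (complex.conjc q) => pc qc H00 H10 hdet; split.
  have -> : s = s * (p * pc + q * qc) by rewrite H00 mulr1.
  have {2}-> : pc = pc * (p * s - q * r) by rewrite hdet mulr1.
  apply/eqP; rewrite -subr_eq0; apply/eqP.
  transitivity (q * (r * pc + s * qc)); first ring.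
  by rewrite H10 mulr0.
have -> : r = r * (p * pc + q * qc) by rewrite H00 mulr1.
have {2}-> : qc = qc * (p * s - q * r) by rewrite hdet mulr1.
apply/eqP; rewrite -subr_eq0; apply/eqP.
transitivity (p * (r * pc + s * qc)); first ring.
by rewrite H10 mulr0.
Qed.

Lemma ord2 (i : 'I_2) : i = 0 \/ i = 1.
Proof. by case: i => [[|[|//]]] Hi; [left|right]; apply: val_inj. Qed.

Lemma mx2_eq (A B : M2) : A 0 0 = B 0 0 -> A 0 1 = B 0 1 ->
  A 1 0 = B 1 0 -> A 1 1 = B 1 1 -> A = B.
Proof.
move=> h1 h2 h3 h4; apply/matrixP => i j.
by case: (ord2 i) => ->; case: (ord2 j) => ->.
Qed.

Lemma SU2_Mq (A : M2) : SU2_set A ->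
  exists a b c d, qn a b c d = 1 /\ A = Mq a b c d.
Proof.
case=> /matrixP H hdet.
have H00 := H 0 0; have H10 := H 1 0.
rewrite !mxE !sum2 !mxE /= in H00 H10.
rewrite det2 in hdet.
have [Hs Hr] := su2_aux H00 H10 hdet.
move: H00 Hs Hr; case Ep : (A 0 0) => [a b]; case Eq : (A 0 1) => [c d] H00 Hs Hr.
exists a, b, c, d; split.
  move: H00; rewrite c1E !cconjE !cmulE !caddE /qn => -[] <- _; ring.
apply: mx2_eq; rewrite !mxE /= ?Ep ?Eq ?Hs ?Hr //.
by rewrite cconjE coppE opprK.
Qed.

End Q.

Section Q2.
Variable R : realType.
Local Notation C := (cpx R).
Local Notation M2 := 'M[cpx R]_2.
Local Open Scope complex_scope.
Local Notation Mq := (@Mq R).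
Local Notation qn := (@qn R).

Lemma Mq_unit a b c d : qn a b c d = 1 ->
  Mq a b c d \is a GRing.unit /\ (Mq a b c d)^-1 = Mq a (-b) (-c) (-d).
Proof.
move=> h.
have h1 : Mq a b c d * Mq a (-b) (-c) (-d) = 1 by rewrite MqMconj h Mq1.
have h2 : Mq a (-b) (-c) (-d) * Mq a b c d = 1 by rewrite MqconjM h Mq1.
have u : Mq a b c d \is a GRing.unit by apply/unitrP; exists (Mq a (-b) (-c) (-d)).
split => //.
by rewrite -[LHS]mulr1 -h1 mulrA mulVr ?mul1r.
Qed.

Lemma SU2_unit (A : M2) : SU2_set A -> A \is a GRing.unit.
Proof. by case/SU2_Mq => a [b] [c] [d] [h ->]; case: (Mq_unit h). Qed.

Lemma SU2M (A B : M2) : SU2_set A -> SU2_set B -> SU2_set (A * B).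
Proof.
case/SU2_Mq => a [b] [c] [d] [h ->]; case/SU2_Mq => a' [b'] [c'] [d'] [h' ->].
rewrite MqM; apply: Mq_SU2.
rewrite -[1]mulr1 -{1}h -h' /qn; ring.
Qed.

Lemma SU2V (A : M2) : SU2_set A -> SU2_set (A^-1).
Proof.
case/SU2_Mq => a [b] [c] [d] [h ->]; case: (Mq_unit h) => _ ->.
by apply: Mq_SU2; rewrite -h /qn; ring.
Qed.

Lemma SU2_1 : SU2_set (1 : M2).
Proof. by rewrite -Mq1; apply: Mq_SU2; rewrite /qn; ring. Qed.

Lemma SU2N (A : M2) : SU2_set A -> SU2_set (- A).
Proof.
case/SU2_Mq => a [b] [c] [d] [h ->]; rewrite MqN.
by apply: Mq_SU2; rewrite -h /qn; ring.
Qed.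

Definition I0 := Mq 0 1 0 0.
Definition J0 := Mq 0 0 1 0.
Definition K0 := Mq 0 0 0 1.

Lemma SU2_I0 : SU2_set I0. Proof. by apply: Mq_SU2; rewrite /qn; ring. Qed.
Lemma SU2_J0 : SU2_set J0. Proof. by apply: Mq_SU2; rewrite /qn; ring. Qed.

Lemma Mqm1 : Mq (-1) 0 0 0 = -1.
Proof. by rewrite -Mq1 MqN oppr0. Qed.

Lemma I0I0 : I0 * I0 = -1.
Proof. by rewrite /I0 MqM -Mqm1; congr Mq; ring. Qed.
Lemma J0J0 : J0 * J0 = -1.
Proof. by rewrite /J0 MqM -Mqm1; congr Mq; ring. Qed.
Lemma I0J0 : I0 * J0 = - (J0 * I0).
Proof. by rewrite /I0 /J0 !MqM MqN; congr Mq; ring. Qed.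

Lemma pure_sq (A : M2) : SU2_set A -> A * A = -1 ->
  exists v1 v2 v3, qn 0 v1 v2 v3 = 1 /\ A = Mq 0 v1 v2 v3.
Proof.
case/SU2_Mq => a [b] [c] [d] [h ->]; rewrite MqM -Mqm1 => /Mq_inj [h0 _ _ _].
have a0 : a = 0.
  have : a ^+ 2 = 0.
    move: h; rewrite /qn => h; rewrite expr2; lra.
  by move/eqP; rewrite sqrf_eq0 => /eqP.
by exists b, c, d; rewrite -a0.
Qed.

Lemma pureMq_sq v1 v2 v3 : qn 0 v1 v2 v3 = 1 ->
  Mq 0 v1 v2 v3 * Mq 0 v1 v2 v3 = -1.
Proof.
move=> h; rewrite MqM -Mqm1 -h /qn; congr Mq; ring.
Qed.

Lemma anticomm_pure (g h : M2) : SU2_set g -> SU2_set h -> g * h = - (h * g) ->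
  g * g = -1 /\ h * h = -1.
Proof.
case/SU2_Mq => a [u1] [u2] [u3] [hg ->]; case/SU2_Mq => b [w1] [w2] [w3] [hh ->].
move=> E; have E' := E; rewrite !MqM MqN in E'; case/Mq_inj: E' => e0 e1 e2 e3.
have E0 : a * b - (u1*w1 + u2*w2 + u3*w3) = 0 by lra.
have E1 : a * w1 + b * u1 = 0 by lra.
have E2 : a * w2 + b * u2 = 0 by lra.
have E3 : a * w3 + b * u3 = 0 by lra.
have b0 : b = 0.
  have : b * qn a u1 u2 u3 = a * (a * b - (u1*w1 + u2*w2 + u3*w3)) +
     u1 * (a * w1 + b * u1) + u2 * (a * w2 + b * u2) + u3 * (a * w3 + b * u3).
    by rewrite /qn; ring.
  by rewrite hg E0 E1 E2 E3 !mulr0 !addr0 mulr1.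
have a0 : a = 0.
  have : a * qn b w1 w2 w3 = b * (a * b - (u1*w1 + u2*w2 + u3*w3)) +
     w1 * (a * w1 + b * u1) + w2 * (a * w2 + b * u2) + w3 * (a * w3 + b * u3).
    by rewrite /qn; ring.
  by rewrite hh E0 E1 E2 E3 !mulr0 !addr0 mulr1.
by subst a b; split; apply: pureMq_sq.
Qed.

End Q2.

Section Q3.
Variable R : realType.
Local Notation C := (cpx R).
Local Notation M2 := 'M[cpx R]_2.
Local Open Scope complex_scope.
Local Notation Mq := (@Mq R).
Local Notation qn := (@qn R).
Local Notation I0 := (@I0 R).
Local Notation J0 := (@J0 R).

Definition isMq (A : M2) := exists a b c d, A = Mq a b c d.

Lemma isMq1 : isMq 1. Proof. by exists 1, 0, 0, 0; rewrite Mq1. Qed.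
Lemma isMqM A B : isMq A -> isMq B -> isMq (A * B).
Proof. by move=> [a [b [c [d ->]]]] [a' [b' [c' [d' ->]]]]; rewrite MqM; do 4 eexists. Qed.
Lemma isMqB A B : isMq A -> isMq B -> isMq (A - B).
Proof. by move=> [a [b [c [d ->]]]] [a' [b' [c' [d' ->]]]]; rewrite MqB; do 4 eexists. Qed.
Lemma isMq_SU2 A : SU2_set A -> isMq A.
Proof. by case/SU2_Mq => a [b [c [d [_ ->]]]]; do 4 eexists. Qed.

Lemma qn0 a b c d : qn a b c d = 0 -> [/\ a = 0, b = 0, c = 0 & d = 0].
Proof.
rewrite /qn => h.
have ha := sqr_ge0 a; have hb := sqr_ge0 b; have hc := sqr_ge0 c; have hd := sqr_ge0 d.
have e : forall x : R, x ^+ 2 = 0 -> x = 0 by move=> x /eqP; rewrite sqrf_eq0 => /eqP.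
split; apply: e; lra.
Qed.

Lemma norm_step (q a b : M2) : isMq q -> q <> 0 -> q * a = b * q ->
  exists m, [/\ SU2_set m, m * a = b * m & forall e, q * e = e * q -> m * e = e * m].
Proof.
case=> y0 [y1 [y2 [y3 ->]]] nz hq.
have pos : 0 < qn y0 y1 y2 y3.
  rewrite lt_def; apply/andP; split; last by rewrite /qn; rewrite !addr_ge0 ?sqr_ge0.
  apply/eqP => /qn0 [h0 h1 h2 h3]; apply: nz; by rewrite h0 h1 h2 h3 Mq0.
set s := Num.sqrt (qn y0 y1 y2 y3).
have spos : 0 < s by rewrite sqrtr_gt0.
exists (Mq (s^-1 * y0) (s^-1 * y1) (s^-1 * y2) (s^-1 * y3)); split.
- apply: Mq_SU2.
  have : s ^+ 2 = qn y0 y1 y2 y3 by rewrite sqr_sqrtr // ltW.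
  rewrite /qn => hs.
  have -> : (s^-1 * y0) ^+ 2 + (s^-1 * y1) ^+ 2 + (s^-1 * y2) ^+ 2 + (s^-1 * y3) ^+ 2
     = s^-1 ^+ 2 * (y0 ^+ 2 + y1 ^+ 2 + y2 ^+ 2 + y3 ^+ 2) by ring.
  by rewrite -hs -exprMn mulVf ?expr1n // gt_eqF.
- by rewrite MqZ -scalerAl hq scalerAr.
- by move=> e he; rewrite MqZ -scalerAl he scalerAr.
Qed.

Lemma rot_core (a b : M2) : a * a = -1 -> b * b = -1 ->
  (1 - b * a) * a = b * (1 - b * a).
Proof.
move=> ha hb; rewrite mulrBl mulrBr mul1r mulr1 -mulrA ha mulrA hb.
by rewrite mulrN1 mulN1r !opprK addrC.
Qed.

Lemma rot_comm (a b e : M2) : e * a = - (a * e) -> e * b = - (b * e) ->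
  (1 - b * a) * e = e * (1 - b * a).
Proof.
move=> ha hb.
have ha' : a * e = - (e * a) by rewrite ha opprK.
have hb' : b * e = - (e * b) by rewrite hb opprK.
rewrite mulrBl mulrBr mul1r mulr1 -mulrA ha' mulrN mulrA hb' mulNr opprK mulrA.
done.
Qed.

Lemma rot_nz (a b : M2) : b * b = -1 -> a <> - b -> 1 - b * a <> 0.
Proof.
move=> hb nab /eqP; rewrite subr_eq0 => /eqP h; apply: nab.
have : b * 1 = b * (b * a) by rewrite -h.
by rewrite mulr1 mulrA hb mulN1r => ->; rewrite opprK.
Qed.

Lemma step1 (g : M2) : SU2_set g -> g * g = -1 ->
  exists m, SU2_set m /\ m * g = I0 * m.
Proof.
move=> sg hg.
have [->|ng] := eqVneq g (- I0).
  by exists J0; split; [exact: (SU2_J0 R) | rewrite mulrN (I0J0 R)].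
have [m [sm hm _]] := @norm_step (1 - I0 * g) g I0
  (isMqB isMq1 (isMqM (isMq_SU2 (SU2_I0 R)) (isMq_SU2 sg)))
  (rot_nz (I0I0 R) (elimN eqP ng)) (rot_core hg (I0I0 R)).
by exists m.
Qed.

Lemma step2 (h : M2) : SU2_set h -> h * h = -1 -> I0 * h = - (h * I0) ->
  exists m, [/\ SU2_set m, m * h = J0 * m & m * I0 = I0 * m].
Proof.
move=> sh hh hI.
have [->|nh] := eqVneq h (- J0).
  by exists I0; split; [exact: (SU2_I0 R) | rewrite mulrN (I0J0 R) opprK|].
have [m [sm hm hc]] := @norm_step (1 - J0 * h) h J0
  (isMqB isMq1 (isMqM (isMq_SU2 (SU2_J0 R)) (isMq_SU2 sh)))
  (rot_nz (J0J0 R) (elimN eqP nh)) (rot_core hh (J0J0 R)).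
exists m; split => //; apply: hc; apply: rot_comm => //.
exact: (I0J0 R).
Qed.

Definition cj (u x : M2) := u * x * u^-1.

Lemma cjM (u x y : M2) : u \is a GRing.unit -> cj u x * cj u y = cj u (x * y).
Proof. by move=> hu; rewrite /cj !mulrA mulrVK. Qed.

Lemma cjN (u x : M2) : cj u (- x) = - cj u x.
Proof. by rewrite /cj mulrN mulNr. Qed.

Lemma cjN1 (u : M2) : u \is a GRing.unit -> cj u (-1) = -1.
Proof. by move=> hu; rewrite cjN /cj mulr1 mulrV. Qed.

Lemma cj_comp (u v x : M2) : u \is a GRing.unit -> v \is a GRing.unit ->
  cj (u * v) x = cj u (cj v x).
Proof. by move=> hu hv; rewrite /cj invrM // !mulrA. Qed.

Lemma cj_eq (u x y : M2) : u \is a GRing.unit -> u * x = y * u -> cj u x = y.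
Proof. by move=> hu h; rewrite /cj h mulrK. Qed.

Lemma SU2cj (u x : M2) : SU2_set u -> SU2_set x -> SU2_set (cj u x).
Proof. by move=> hu hx; rewrite /cj; apply: SU2M; [apply: SU2M|apply: SU2V]. Qed.

Lemma normalize (g h : M2) : SU2_set g -> SU2_set h -> g * h = - (h * g) ->
  exists m, [/\ SU2_set m, cj m g = I0 & cj m h = J0].
Proof.
move=> sg sh gh.
have [gg hh] := anticomm_pure sg sh gh.
have [m1 [sm1 hm1]] := step1 sg gg.
have u1 := SU2_unit sm1.
have e1 : cj m1 g = I0 by apply: cj_eq.
set h1 := cj m1 h.
have sh1 : SU2_set h1 by apply: SU2cj.
have hh1 : h1 * h1 = -1 by rewrite /h1 cjM // hh cjN1.
have hI : I0 * h1 = - (h1 * I0) by rewrite -e1 /h1 !cjM // gh cjN.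
have [m2 [sm2 hm2 hc2]] := step2 sh1 hh1 hI.
have u2 := SU2_unit sm2.
exists (m2 * m1); split.
- exact: SU2M.
- by rewrite cj_comp // e1; apply: cj_eq.
- by rewrite cj_comp //; apply: cj_eq.
Qed.

End Q3.

Section Q4.
Variable R : realType.
Local Notation C := (cpx R).
Local Notation M2 := 'M[cpx R]_2.
Local Open Scope complex_scope.
Local Notation Mq := (@Mq R).
Local Notation qn := (@qn R).
Local Notation I0 := (@I0 R).
Local Notation J0 := (@J0 R).
Local Notation cj := (@cj R).

Definition Rj (v1 v2 v3 : R) :=
  Mq 0 (2 * v1 * v2) (2 * v2 ^+ 2 - (v1 ^+ 2 + v2 ^+ 2 + v3 ^+ 2)) (2 * v2 * v3).
Definition Ri (v1 v2 v3 : R) :=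
  Mq 0 (2 * v1 ^+ 2 - (v1 ^+ 2 + v2 ^+ 2 + v3 ^+ 2)) (2 * v1 * v2) (2 * v1 * v3).

Lemma Rj_cj v1 v2 v3 : qn 0 v1 v2 v3 = 1 -> cj (Mq 0 v1 v2 v3) J0 = Rj v1 v2 v3.
Proof.
move=> h; case: (Mq_unit h) => _ hinv.
by rewrite /cj hinv /J0 !MqM /Rj; congr Mq; ring.
Qed.

Lemma Ri_cj v1 v2 v3 : qn 0 v1 v2 v3 = 1 -> cj (Mq 0 v1 v2 v3) I0 = Ri v1 v2 v3.
Proof.
move=> h; case: (Mq_unit h) => _ hinv.
by rewrite /cj hinv /I0 !MqM /Ri; congr Mq; ring.
Qed.

Lemma Rj_opp v1 v2 v3 : Rj (- v1) (- v2) (- v3) = Rj v1 v2 v3.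
Proof. by rewrite /Rj; congr Mq; ring. Qed.
Lemma Ri_opp v1 v2 v3 : Ri (- v1) (- v2) (- v3) = Ri v1 v2 v3.
Proof. by rewrite /Ri; congr Mq; ring. Qed.

Lemma cjV (u x : M2) : u \is a GRing.unit -> x \is a GRing.unit ->
  (cj u x)^-1 = cj u (x^-1).
Proof.
move=> hu hx; rewrite /cj !invrM ?unitrV ?invrK ?mulrA //.
by rewrite unitrMr.
Qed.

Lemma commut_cj (u a b : M2) : u \is a GRing.unit -> a \is a GRing.unit ->
  b \is a GRing.unit -> commut (cj u a) (cj u b) = cj u (commut a b).
Proof.
move=> hu ha hb; rewrite /commut !cjV // !cjM //.
Qed.

Lemma commut_I0J0 : commut I0 J0 = -1.
Proof.
have [_ hI] := @Mq_unit R 0 1 0 0 (ltac:(by rewrite /qn; ring)).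
have [_ hJ] := @Mq_unit R 0 0 1 0 (ltac:(by rewrite /qn; ring)).
by rewrite /commut /I0 /J0 hI hJ !MqM -Mqm1; congr Mq; ring.
Qed.

Lemma commut_J0I0 : commut J0 I0 = -1.
Proof.
have [_ hI] := @Mq_unit R 0 1 0 0 (ltac:(by rewrite /qn; ring)).
have [_ hJ] := @Mq_unit R 0 0 1 0 (ltac:(by rewrite /qn; ring)).
by rewrite /commut /I0 /J0 hI hJ !MqM -Mqm1; congr Mq; ring.
Qed.

Lemma hom_phi v1 v2 v3 : qn 0 v1 v2 v3 = 1 ->
  commut I0 J0 * commut (Rj v1 v2 v3) (Ri v1 v2 v3) = 1.
Proof.
move=> h; have [uk _] := Mq_unit h.
rewrite -Rj_cj // -Ri_cj // commut_cj //; last 2 first.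
- exact: SU2_unit (SU2_J0 R).
- exact: SU2_unit (SU2_I0 R).
by rewrite commut_J0I0 cjN1 // commut_I0J0 mulN1r opprK.
Qed.

Lemma trMq a b c d : \tr (Mq a b c d) = (a + a) +i* 0.
Proof.
rewrite /mxtrace sum2 !mxE /= caddE; congr (_ +i* _); ring.
Qed.

Lemma tr_cj (u x : M2) : u \is a GRing.unit -> \tr (cj u x) = \tr x.
Proof.
move=> hu; rewrite /cj -!mulmxE mxtrace_mulC !mulmxE mulrA mulVr ?mul1r //.
Qed.

Lemma special_norm (g h k : M2) : SU2_set g -> SU2_set h -> SU2_set k ->
  commut g h = -1 -> k * k = -1 ->
  exists m v1 v2 v3, [/\ SU2_set m, qn 0 v1 v2 v3 = 1, cj m g = I0, cj m h = J0 &
     cj m (cj k h) = Rj v1 v2 v3 /\ cj m (cj k g) = Ri v1 v2 v3].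
Proof.
move=> sg sh sk hc hk.
have ug := SU2_unit sg; have uh := SU2_unit sh; have uk := SU2_unit sk.
have gh : g * h = - (h * g).
  have -> : g * h = commut g h * h * g by rewrite /commut !divrK.
  by rewrite hc mulN1r mulNr.
have [m [sm e1 e2]] := normalize sg sh gh.
have um := SU2_unit sm.
set k' := cj m k.
have sk' : SU2_set k' by apply: SU2cj.
have hk' : k' * k' = -1 by rewrite /k' cjM // hk cjN1.
have [v1 [v2 [v3 [hv ek]]]] := pure_sq sk' hk'.
have mk : m * k = k' * m by rewrite /k' /cj divrK.
exists m, v1, v2, v3; split => //; split.
- by rewrite -cj_comp // mk cj_comp ?e2 -/k' ?ek ?Rj_cj // -ek; exact: SU2_unit.
- by rewrite -cj_comp // mk cj_comp ?e1 -/k' ?ek ?Ri_cj // -ek; exact: SU2_unit.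
Qed.

End Q4.

Lemma cont_comp (X Y Z : topologicalType) (f : X -> Y) (g : Y -> Z) :
  continuous f -> continuous g -> continuous (g \o f).
Proof. by move=> hf hg x; apply: continuous_comp; [exact: hf | exact: hg]. Qed.

Lemma cont_ext (X Y : topologicalType) (f g : X -> Y) :
  (forall x, f x = g x) -> continuous f -> continuous g.
Proof. by move=> e; have -> : f = g by apply: funext. Qed.

Lemma mx_entry_cont (T : topologicalType) m n (i : 'I_m) (j : 'I_n) :
  continuous (fun M : 'M[T]_(m, n) => M i j).
Proof.
move=> M A /= hA.
exists (fun i' j' => if (i' == i) && (j' == j) then A else setT).
  by move=> i' j'; case: ifP => [/andP [/eqP -> /eqP ->] //|_]; exact: filterT.
by move=> N /(_ i j); rewrite !eqxx.
Qed.

Lemma mx_cont (X T : topologicalType) m n (f : X -> 'M[T]_(m, n)) :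
  (forall i j, continuous (fun x => f x i j)) -> continuous f.
Proof.
move=> hf x A [P hP sPA].
have : \forall y \near x, forall ij : 'I_m * 'I_n, P ij.1 ij.2 (f y ij.1 ij.2).
  apply: filter_forall => -[i j] /=; exact: (hf i j x _ (hP i j)).
by apply: filterS => y hy; apply: sPA => i j; exact: (hy (i, j)).
Qed.

Lemma pair_cont (X Y Z : topologicalType) (f : X -> Y) (g : X -> Z) :
  continuous f -> continuous g -> continuous (fun x => (f x, g x)).
Proof. by move=> hf hg x; apply: cvg_pair; [exact: hf | exact: hg]. Qed.

Lemma fst_cont (Y Z : topologicalType) : continuous (@fst Y Z).
Proof. by move=> [y z]; exact: cvg_fst. Qed.
Lemma snd_cont (Y Z : topologicalType) : continuous (@snd Y Z).
Proof. by move=> [y z]; exact: cvg_snd. Qed.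

Lemma set_val_cont (X : topologicalType) (A : set X) :
  continuous (@set_val X A : set_type A -> X).
Proof. exact: initial_continuous. Qed.

Lemma into_set_type_cont (Y X : topologicalType) (A : set X) (f : Y -> set_type A) :
  continuous (set_val \o f) -> continuous f.
Proof. exact: (@continuous_comp_initial _ _ _ set_val f). Qed.

Section Cpx.
Variable R : realType.
Local Notation C := (cpx R).

Lemma cpx_to_pair_cont : continuous (@cpx_to_pair R).
Proof. exact: (@initial_continuous C _ (@cpx_to_pair R)). Qed.

Lemma Re_cont : continuous (@complex.Re R : C -> R).
Proof. exact: (cont_comp cpx_to_pair_cont (@fst_cont R R)). Qed.
Lemma Im_cont : continuous (@complex.Im R : C -> R).
Proof. exact: (cont_comp cpx_to_pair_cont (@snd_cont R R)). Qed.

Lemma into_cpx_cont (X : topologicalType) (f : X -> C) :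
  continuous (fun x => complex.Re (f x)) -> continuous (fun x => complex.Im (f x)) ->
  continuous f.
Proof.
move=> h1 h2.
apply: (@continuous_comp_initial _ _ _ (@cpx_to_pair R) f).
exact: (pair_cont h1 h2).
Qed.
End Cpx.

Section RealCont.
Variables (R : realType) (X : topologicalType).
Implicit Types f g : X -> R.
Lemma rD_cont f g : continuous f -> continuous g -> continuous (fun x => f x + g x).
Proof. by move=> hf hg x; apply: continuousD; [exact: hf|exact: hg]. Qed.
Lemma rM_cont f g : continuous f -> continuous g -> continuous (fun x => f x * g x).
Proof. by move=> hf hg x; apply: continuousM; [exact: hf|exact: hg]. Qed.
Lemma rN_cont f : continuous f -> continuous (fun x => - f x).
Proof. by move=> hf x; apply: continuousN; exact: hf. Qed.
Lemma rB_cont f g : continuous f -> continuous g -> continuous (fun x => f x - g x).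
Proof. by move=> hf hg; apply: rD_cont => //; apply: rN_cont. Qed.
Lemma rC_cont (c : R) : continuous (fun _ : X => c).
Proof. exact: cst_continuous. Qed.
End RealCont.

Section CpxCont.
Variables (R : realType) (X : topologicalType).
Local Notation C := (cpx R).
Local Notation M2 := 'M[cpx R]_2.
Local Open Scope complex_scope.
Implicit Types f g : X -> C.

Lemma ReD (z w : C) : complex.Re (z + w) = complex.Re z + complex.Re w.
Proof. by case: z; case: w. Qed.
Lemma ImD (z w : C) : complex.Im (z + w) = complex.Im z + complex.Im w.
Proof. by case: z; case: w. Qed.
Lemma ReM (z w : C) : complex.Re (z * w) = complex.Re z * complex.Re w - complex.Im z * complex.Im w.
Proof. by case: z; case: w. Qed.
Lemma ImM (z w : C) : complex.Im (z * w) = complex.Re z * complex.Im w + complex.Im z * complex.Re w.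
Proof. by case: z => a b; case: w => c d /=; ring. Qed.

Lemma Re_comp_cont f : continuous f -> continuous (fun x => complex.Re (f x)).
Proof. by move=> hf; apply: (cont_comp hf (@Re_cont R)). Qed.
Lemma Im_comp_cont f : continuous f -> continuous (fun x => complex.Im (f x)).
Proof. by move=> hf; apply: (cont_comp hf (@Im_cont R)). Qed.

Lemma cD_cont f g : continuous f -> continuous g -> continuous (fun x => f x + g x).
Proof.
move=> hf hg; apply: into_cpx_cont.
- apply: (cont_ext (f := fun x => complex.Re (f x) + complex.Re (g x))).
    by move=> x; rewrite ReD.
  by apply: rD_cont; apply: Re_comp_cont.
- apply: (cont_ext (f := fun x => complex.Im (f x) + complex.Im (g x))).
    by move=> x; rewrite ImD.
  by apply: rD_cont; apply: Im_comp_cont.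
Qed.

Lemma cM_cont f g : continuous f -> continuous g -> continuous (fun x => f x * g x).
Proof.
move=> hf hg; apply: into_cpx_cont.
- apply: (cont_ext (f := fun x => complex.Re (f x) * complex.Re (g x) - complex.Im (f x) * complex.Im (g x))).
    by move=> x; rewrite ReM.
  by apply: rB_cont; apply: rM_cont; (apply: Re_comp_cont || apply: Im_comp_cont).
- apply: (cont_ext (f := fun x => complex.Re (f x) * complex.Im (g x) + complex.Im (f x) * complex.Re (g x))).
    by move=> x; rewrite ImM.
  by apply: rD_cont; apply: rM_cont; (apply: Re_comp_cont || apply: Im_comp_cont).
Qed.

Lemma cpx_of_cont (a b : X -> R) : continuous a -> continuous b ->
  continuous (fun x => (a x +i* b x) : C).
Proof. by move=> ha hb; apply: into_cpx_cont. Qed.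

Lemma mul2E (A B : M2) i j : (A * B) i j = A i 0 * B 0 j + A i 1 * B 1 j.
Proof. by rewrite -mulmxE mxE sum2. Qed.

Lemma entry_cont (F : X -> M2) i j : continuous F -> continuous (fun x => F x i j).
Proof. by move=> hF; apply: (cont_comp hF (@mx_entry_cont _ _ _ i j)). Qed.

Lemma mM_cont (F G : X -> M2) : continuous F -> continuous G -> continuous (fun x => F x * G x).
Proof.
move=> hF hG; apply: mx_cont => i j.
apply: (cont_ext (f := fun x => F x i 0 * G x 0 j + F x i 1 * G x 1 j)).
  by move=> x; rewrite mul2E.
by apply: cD_cont; apply: cM_cont; apply: entry_cont.
Qed.

Lemma retr_cont (F : X -> M2) : continuous F -> continuous (fun x => complex.Re (\tr (F x))).
Proof.
move=> hF; apply: Re_comp_cont.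
apply: (cont_ext (f := fun x => F x 0 0 + F x 1 1)).
  by move=> x; rewrite /mxtrace sum2.
by apply: cD_cont; apply: entry_cont.
Qed.

End CpxCont.

Section QSpace.
Context {X : topologicalType} (r : X -> X -> Prop).

Lemma qpi_cont : continuous (qpi r).
Proof. by apply/continuousP => A oA. Qed.

Lemma qspace_cont (Y : topologicalType) (f : qspace r -> Y) :
  continuous (f \o qpi r) -> continuous f.
Proof. by move/continuousP => h; apply/continuousP => A /h. Qed.

Definition qrep (q : qspace r) : X := proj1_sig (cid (proj2_sig q)).

Lemma qrepK q : qpi r (qrep q) = q.
Proof.
rewrite /qrep; case: (cid _) => x hx /=.
apply: eq_sig_hprop => [y p1 p2|]; first exact: Prop_irrelevance.
by rewrite /= hx.
Qed.

Hypothesis r_refl : forall x, r x x.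
Hypothesis r_sym : forall x y, r x y -> r y x.
Hypothesis r_trans : forall x y z, r x y -> r y z -> r x z.

Lemma qpi_eqP x y : qpi r x = qpi r y <-> r x y.
Proof.
split.
  move=> /(congr1 (@proj1_sig _ _)) /= e.
  have : [set z | r y z] y by exact: r_refl.
  by rewrite -e.
move=> hxy; apply: eq_sig_hprop => [z p1 p2|]; first exact: Prop_irrelevance.
rewrite /=; apply/seteqP; split => z /=.
  by move=> hxz; apply: r_trans (r_sym hxy) hxz.
by move=> hyz; apply: r_trans hxy hyz.
Qed.

Lemma qrep_rel x : r x (qrep (qpi r x)).
Proof. by apply/qpi_eqP; rewrite qrepK. Qed.

End QSpace.

Lemma sval_inj (T : Type) (P : T -> Prop) (u v : {x | P x}) : sval u = sval v -> u = v.
Proof. by apply: eq_sig_hprop => x p q; exact: Prop_irrelevance. Qed.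

Section Main1.
Variable R : realType.
Local Notation C := (cpx R).
Local Notation M2 := 'M[cpx R]_2.
Local Open Scope complex_scope.
Local Notation Mq := (@Mq R).
Local Notation qn := (@qn R).
Local Notation I0 := (@I0 R).
Local Notation J0 := (@J0 R).
Local Notation cj := (@cj R).

Lemma rX2_cont (X : topologicalType) (f : X -> R) : continuous f -> continuous (fun x => f x ^+ 2).
Proof. by move=> hf; apply: (cont_ext (f := fun x => f x * f x)) => [x|]; [rewrite expr2 | apply: rM_cont]. Qed.

Ltac pc := repeat first [ apply: rB_cont | apply: rD_cont | apply: rM_cont | apply: rN_cont
  | apply: rX2_cont | apply: rC_cont | assumption ].

Lemma MqE a b c d i j : Mq a b c d i j =
  if i == 0 then (if j == 0 then a +i* b else c +i* d)
  else (if j == 0 then (- c) +i* d else a +i* (- b)).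
Proof. by rewrite mxE. Qed.

Lemma Mq_cont (X : topologicalType) (a b c d : X -> R) :
  continuous a -> continuous b -> continuous c -> continuous d ->
  continuous (fun x => Mq (a x) (b x) (c x) (d x)).
Proof.
move=> ha hb hc hd; apply: mx_cont => i j.
case: (ord2 i) => ->; case: (ord2 j) => ->;
  (apply: cont_ext; [by move=> x; rewrite MqE /= | apply: cpx_of_cont; pc]).
Qed.

Definition o0 : 'I_3 := ord0.
Definition o1 : 'I_3 := Ordinal (isT : (1 < 3)%N).
Definition o2 : 'I_3 := Ordinal (isT : (2 < 3)%N).

Lemma sum3 (F : 'I_3 -> R) : \sum_(i < 3) F i = F o0 + F o1 + F o2.
Proof.
rewrite !big_ord_recl big_ord0 addr0 addrA; congr (F _ + F _ + F _); exact: val_inj.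
Qed.

Lemma ord3 (i : 'I_3) : [\/ i = o0, i = o1 | i = o2].
Proof. by case: i => [[|[|[|//]]]] Hi; [constructor 1|constructor 2|constructor 3]; apply: val_inj. Qed.

Lemma rv3_eq (z w : 'rV[R]_3) : z 0 o0 = w 0 o0 -> z 0 o1 = w 0 o1 -> z 0 o2 = w 0 o2 -> z = w.
Proof.
move=> h0 h1 h2; apply/matrixP => i j.
have -> : i = 0 by apply: val_inj; case: i => [[|//]].
by case: (ord3 j) => ->.
Qed.

Definition zc (k : 'I_3) (z : 'rV[R]_3) := z 0 k.
Lemma zc_cont k : continuous (zc k).
Proof. exact: mx_entry_cont. Qed.

Definition nv (z : 'rV[R]_3) := qn 0 (zc o0 z) (zc o1 z) (zc o2 z).

Lemma S2_nv (v : S2 R) : nv (set_val v) = 1.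
Proof.
have h : \sum_(i < 3) (set_val v) 0 i ^+ 2 = 1 := set_valP v.
by rewrite sum3 in h; rewrite /nv /qn /zc expr0n /= add0r -h.
Qed.

Definition RjV (z : 'rV[R]_3) := Rj (zc o0 z) (zc o1 z) (zc o2 z).
Definition RiV (z : 'rV[R]_3) := Ri (zc o0 z) (zc o1 z) (zc o2 z).

Lemma Rj_prod v1 v2 v3 : Rj v1 v2 v3 = Mq 0 v1 v2 v3 * J0 * Mq 0 (-v1) (-v2) (-v3).
Proof. by rewrite /J0 !MqM /Rj; congr Mq; ring. Qed.
Lemma Ri_prod v1 v2 v3 : Ri v1 v2 v3 = Mq 0 v1 v2 v3 * I0 * Mq 0 (-v1) (-v2) (-v3).
Proof. by rewrite /I0 !MqM /Ri; congr Mq; ring. Qed.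

Lemma MqV_cont : continuous (fun z => Mq 0 (zc o0 z) (zc o1 z) (zc o2 z)).
Proof.
have h0 := @zc_cont o0; have h1 := @zc_cont o1; have h2 := @zc_cont o2.
by apply: Mq_cont => //; exact: rC_cont.
Qed.
Lemma MqVN_cont : continuous (fun z => Mq 0 (- zc o0 z) (- zc o1 z) (- zc o2 z)).
Proof.
have h0 := @zc_cont o0; have h1 := @zc_cont o1; have h2 := @zc_cont o2.
by apply: Mq_cont; [exact: rC_cont| apply: rN_cont..].
Qed.

Lemma RjV_cont : continuous RjV.
Proof.
apply: (cont_ext (f := fun z => Mq 0 (zc o0 z) (zc o1 z) (zc o2 z) * J0 *
   Mq 0 (- zc o0 z) (- zc o1 z) (- zc o2 z))); first by move=> z; rewrite /RjV Rj_prod.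
by apply: mM_cont; [apply: mM_cont; [exact: MqV_cont|exact: cst_continuous]|exact: MqVN_cont].
Qed.
Lemma RiV_cont : continuous RiV.
Proof.
apply: (cont_ext (f := fun z => Mq 0 (zc o0 z) (zc o1 z) (zc o2 z) * I0 *
   Mq 0 (- zc o0 z) (- zc o1 z) (- zc o2 z))); first by move=> z; rewrite /RiV Ri_prod.
by apply: mM_cont; [apply: mM_cont; [exact: MqV_cont|exact: cst_continuous]|exact: MqVN_cont].
Qed.

Lemma SU2_Rj a b c : qn 0 a b c = 1 -> SU2_set (Rj a b c).
Proof. by move=> h; rewrite -Rj_cj //; apply: SU2cj; [apply: Mq_SU2|exact: SU2_J0]. Qed.
Lemma SU2_Ri a b c : qn 0 a b c = 1 -> SU2_set (Ri a b c).
Proof. by move=> h; rewrite -Ri_cj //; apply: SU2cj; [apply: Mq_SU2|exact: SU2_I0]. Qed.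

Definition sI0 : SU2 R := exist _ I0 (mem_set (SU2_I0 R)).
Definition sJ0 : SU2 R := exist _ J0 (mem_set (SU2_J0 R)).
Definition sRj (v : S2 R) : SU2 R := exist _ (RjV (set_val v)) (mem_set (SU2_Rj (S2_nv v))).
Definition sRi (v : S2 R) : SU2 R := exist _ (RiV (set_val v)) (mem_set (SU2_Ri (S2_nv v))).

Definition phiK (v : S2 R) : K4 R := (sI0, sJ0, sRj v, sRi v).

Lemma phiK_hom v : Hom_set (phiK v).
Proof. exact: (hom_phi (S2_nv v)). Qed.

Definition phiH (v : S2 R) : Defs.Hom R := exist _ (phiK v) (mem_set (phiK_hom v)).

Lemma phiK_special v : special_set (phiK v).
Proof.
have h := S2_nv v.
exists (exist _ (Mq 0 (zc o0 (set_val v)) (zc o1 (set_val v)) (zc o2 (set_val v)))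
          (mem_set (Mq_SU2 h))) => /=.
split.
- exact: commut_I0J0.
- exact: pureMq_sq.
- exact: (esym (Rj_cj h)).
- exact: (esym (Ri_cj h)).
Qed.

Definition phiS (v : S2 R) : SpecialSubspace R :=
  exist _ (qpi (@conj_rel R) (phiH v))
    (mem_set (ex_intro (fun x : Defs.Hom R => special_set (set_val x) /\ _ = qpi (@conj_rel R) x)
      (phiH v) (conj (phiK_special v) erefl))).

Lemma phiH_cont : continuous phiH.
Proof.
apply: into_set_type_cont => /=.
rewrite /comp /=.
apply: pair_cont; [apply: pair_cont; [apply: pair_cont|] |].
- exact: cst_continuous.
- exact: cst_continuous.
- apply: into_set_type_cont; exact: (cont_comp (@set_val_cont _ _) RjV_cont).
- apply: into_set_type_cont; exact: (cont_comp (@set_val_cont _ _) RiV_cont).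
Qed.

Lemma phiS_cont : continuous phiS.
Proof.
apply: into_set_type_cont.
exact: (cont_comp phiH_cont (@qpi_cont _ _)).
Qed.

End Main1.

Section Main2.
Variable R : realType.
Local Notation C := (cpx R).
Local Notation M2 := 'M[cpx R]_2.
Local Open Scope complex_scope.
Local Notation Mq := (@Mq R).
Local Notation qn := (@qn R).
Local Notation I0 := (@I0 R).
Local Notation J0 := (@J0 R).
Local Notation cj := (@cj R).
Local Notation HomT := (Defs.Hom R).

Lemma sq_cases (x y : R) : x ^+ 2 = y ^+ 2 -> y = x \/ y = - x.
Proof.
move/eqP; rewrite eq_sym eqf_sqr => /orP [/eqP -> | /eqP ->]; by [left|right].
Qed.

Lemma pm_lemma (a b c a' b' c' : R) : a ^+ 2 = a' ^+ 2 -> b ^+ 2 = b' ^+ 2 ->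
  c ^+ 2 = c' ^+ 2 -> a * b = a' * b' -> a * c = a' * c' -> b * c = b' * c' ->
  (a' = a /\ b' = b /\ c' = c) \/ (a' = - a /\ b' = - b /\ c' = - c).
Proof.
move=> ha hb hc hab hac hbc.
have canc : forall x y z : R, x != 0 -> x * y = x * z -> z = y.
  by move=> x y z nx /(mulfI nx) ->.
have [a0|na] := eqVneq a 0.
  have a'0 : a' = 0 by case: (sq_cases ha) => ->; rewrite a0 ?oppr0.
  have [b0|nb] := eqVneq b 0.
    have b'0 : b' = 0 by case: (sq_cases hb) => ->; rewrite b0 ?oppr0.
    case: (sq_cases hc) => ->; [left|right]; rewrite a0 a'0 b0 b'0 ?oppr0; by [].
  case: (sq_cases hb) => eb.
    left; split; [by rewrite a0 a'0|split => //].
    by apply: (canc b _ _ nb); rewrite hbc eb.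
  right; split; [by rewrite a0 a'0 oppr0|split => //].
  by apply: (canc b _ _ nb); rewrite mulrN hbc eb mulNr opprK.
case: (sq_cases ha) => ea.
  left; split => //; split.
    by apply: (canc a _ _ na); rewrite hab ea.
  by apply: (canc a _ _ na); rewrite hac ea.
right; split => //; split.
  by apply: (canc a _ _ na); rewrite mulrN hab ea mulNr opprK.
by apply: (canc a _ _ na); rewrite mulrN hac ea mulNr opprK.
Qed.

Lemma cj1 (x : M2) : cj 1 x = x.
Proof. by rewrite /cj invr1 mul1r mulr1. Qed.

Lemma cjK (u x : M2) : u \is a GRing.unit -> cj (u^-1) (cj u x) = x.
Proof. by move=> hu; rewrite -cj_comp ?unitrV // mulVr // cj1. Qed.

Lemma conj_refl (x : HomT) : conj_rel x x.
Proof.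
exists (exist _ 1 (mem_set (SU2_1 R))) => /=.
by split; rewrite -/(cj 1 _) cj1.
Qed.

Lemma conj_sym (x y : HomT) : conj_rel x y -> conj_rel y x.
Proof.
case=> k /= [e1 e2 e3 e4].
have sk : SU2_set (set_val k) := set_valP k.
have uk := SU2_unit sk.
exists (exist _ (set_val k)^-1 (mem_set (SU2V sk))) => /=.
by split; rewrite -/(cj _ _) ?e1 ?e2 ?e3 ?e4 -/(cj _ _) cjK.
Qed.

Lemma conj_trans (x y z : HomT) : conj_rel x y -> conj_rel y z -> conj_rel x z.
Proof.
case=> k /= [e1 e2 e3 e4]; case=> k' /= [f1 f2 f3 f4].
have sk : SU2_set (set_val k) := set_valP k.
have sk' : SU2_set (set_val k') := set_valP k'.
have uk := SU2_unit sk; have uk' := SU2_unit sk'.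
exists (exist _ (set_val k' * set_val k) (mem_set (SU2M sk' sk))) => /=.
split; rewrite -/(cj _ _) cj_comp //; rewrite -/(cj _ _) in f1 f2 f3 f4;
rewrite -/(cj _ _) in e1 e2 e3 e4.
- by rewrite f1 e1.
- by rewrite f2 e2.
- by rewrite f3 e3.
- by rewrite f4 e4.
Qed.

Lemma anti_refl (v : S2 R) : antipodal_rel v v.
Proof. by left. Qed.
Lemma anti_sym (v w : S2 R) : antipodal_rel v w -> antipodal_rel w v.
Proof. by rewrite /antipodal_rel; case=> ->; [left|right; rewrite opprK]. Qed.
Lemma anti_trans (u v w : S2 R) : antipodal_rel u v -> antipodal_rel v w -> antipodal_rel u w.
Proof.
rewrite /antipodal_rel; case=> e1; case=> e2; rewrite e2 e1; by [left|right|right|left; rewrite opprK].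
Qed.

End Main2.

Section Main3.
Variable R : realType.
Local Notation C := (cpx R).
Local Notation M2 := 'M[cpx R]_2.
Local Notation Mq := (@Mq R).
Local Notation qn := (@qn R).
Local Notation I0 := (@I0 R).
Local Notation J0 := (@J0 R).
Local Notation cj := (@cj R).
Local Notation HomT := (Defs.Hom R).
Local Notation Re := (@complex.Re R).

Definition Fh (x : HomT) : 'rV[R]_5 :=
  \row_(i < 5) nth 0 [:: Re (\tr (h2 (set_val x) * g1 (set_val x)));
                         Re (\tr (h2 (set_val x) * h1 (set_val x)));
                         Re (\tr (h2 (set_val x) * (g1 (set_val x) * h1 (set_val x))));
                         Re (\tr (g2 (set_val x) * h1 (set_val x)));
                         Re (\tr (g2 (set_val x) * (g1 (set_val x) * h1 (set_val x))))] i.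

Definition Gv (z : 'rV[R]_3) : 'rV[R]_5 :=
  \row_(i < 5) nth 0 [:: Re (\tr (RiV z * I0)); Re (\tr (RiV z * J0));
                         Re (\tr (RiV z * (I0 * J0))); Re (\tr (RjV z * J0));
                         Re (\tr (RjV z * (I0 * J0)))] i.

Lemma Fh_phi (v : S2 R) : Fh (phiH v) = Gv (set_val v).
Proof. by []. Qed.

Lemma ord5 (X : topologicalType) (F : 'I_5 -> X -> R) :
  (forall k : nat, forall (h : (k < 5)%N), continuous (F (Ordinal h))) ->
  forall i, continuous (F i).
Proof. by move=> h [k hk]; apply: h. Qed.

Lemma gg1_cont : continuous (fun x : HomT => g1 (set_val x)).
Proof.
exact: (cont_comp (@set_val_cont _ _) (cont_comp (@fst_cont _ _)
  (cont_comp (@fst_cont _ _) (cont_comp (@fst_cont _ _) (@set_val_cont _ _))))).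
Qed.
Lemma hh1_cont : continuous (fun x : HomT => h1 (set_val x)).
Proof.
exact: (cont_comp (@set_val_cont _ _) (cont_comp (@fst_cont _ _)
  (cont_comp (@fst_cont _ _) (cont_comp (@snd_cont _ _) (@set_val_cont _ _))))).
Qed.
Lemma gg2_cont : continuous (fun x : HomT => g2 (set_val x)).
Proof.
exact: (cont_comp (@set_val_cont _ _) (cont_comp (@fst_cont _ _)
  (cont_comp (@snd_cont _ _) (@set_val_cont _ _)))).
Qed.
Lemma hh2_cont : continuous (fun x : HomT => h2 (set_val x)).
Proof.
exact: (cont_comp (@set_val_cont _ _) (cont_comp (@snd_cont _ _) (@set_val_cont _ _))).
Qed.

Lemma Fh_cont : continuous Fh.
Proof.
apply: mx_cont => i; apply: ord5 => k hk.
apply: (cont_ext (f := fun x => nth 0 [:: Re (\tr (h2 (set_val x) * g1 (set_val x)));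
                         Re (\tr (h2 (set_val x) * h1 (set_val x)));
                         Re (\tr (h2 (set_val x) * (g1 (set_val x) * h1 (set_val x))));
                         Re (\tr (g2 (set_val x) * h1 (set_val x)));
                         Re (\tr (g2 (set_val x) * (g1 (set_val x) * h1 (set_val x))))] k)).
  by move=> x; rewrite mxE.
have a := gg1_cont; have b := hh1_cont; have c := gg2_cont; have d := hh2_cont.
case: k hk => [|[|[|[|[|//]]]]] _ /=; apply: retr_cont;
  repeat (apply: mM_cont => //).
Qed.

Lemma Gv_cont : continuous Gv.
Proof.
apply: mx_cont => i; apply: ord5 => k hk.
apply: (cont_ext (f := fun z => nth 0 [:: Re (\tr (RiV z * I0)); Re (\tr (RiV z * J0));
                         Re (\tr (RiV z * (I0 * J0))); Re (\tr (RjV z * J0));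
                         Re (\tr (RjV z * (I0 * J0)))] k)).
  by move=> x; rewrite mxE.
have a := @RiV_cont R; have b := @RjV_cont R.
have c : continuous (fun _ : 'rV[R]_3 => I0) by exact: cst_continuous.
have d : continuous (fun _ : 'rV[R]_3 => J0) by exact: cst_continuous.
have e : continuous (fun _ : 'rV[R]_3 => I0 * J0) by exact: cst_continuous.
by case: k hk => [|[|[|[|[|//]]]]] _ /=; apply: retr_cont; apply: mM_cont.
Qed.

Lemma Fh_inv (x y : HomT) : conj_rel x y -> Fh x = Fh y.
Proof.
case=> k /= [e1 e2 e3 e4].
have uk := SU2_unit (set_valP k).
rewrite -/(cj _ _) in e1 e2 e3 e4.
rewrite /Fh e1 e2 e3 e4 !cjM // !tr_cj //.
Qed.

End Main3.

Section Main4.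
Variable R : realType.
Local Notation C := (cpx R).
Local Notation M2 := 'M[cpx R]_2.
Local Notation Mq := (@Mq R).
Local Notation qn := (@qn R).
Local Notation I0 := (@I0 R).
Local Notation J0 := (@J0 R).
Local Notation cj := (@cj R).
Local Notation HomT := (Defs.Hom R).
Local Notation Re := (@complex.Re R).

Lemma ReMq a b c d : Re (\tr (Mq a b c d)) = a + a.
Proof. by rewrite trMq. Qed.

Lemma Gv_eqs (z w : 'rV[R]_3) : Gv z = Gv w -> nv z = 1 -> nv w = 1 ->
  w = z \/ w = - z.
Proof.
move=> e hz hw.
have E : forall i, Gv z 0 i = Gv w 0 i by move=> i; rewrite e.
have E0 := E (Ordinal (isT : (0 < 5)%N)); have E1 := E (Ordinal (isT : (1 < 5)%N)).
have E2 := E (Ordinal (isT : (2 < 5)%N)); have E3 := E (Ordinal (isT : (3 < 5)%N)).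
have E4 := E (Ordinal (isT : (4 < 5)%N)).
rewrite !mxE /= /RiV /RjV /Ri /Rj /I0 /J0 !MqM !ReMq in E0 E1 E2 E3 E4.
move: hz hw; rewrite /nv /qn.
move: E0 E1 E2 E3 E4.
set a := zc o0 z; set b := zc o1 z; set c := zc o2 z.
set a' := zc o0 w; set b' := zc o1 w; set c' := zc o2 w.
move=> E0 E1 E2 E3 E4 hz hw.
have ha : a ^+ 2 = a' ^+ 2 by lra.
have hb : b ^+ 2 = b' ^+ 2 by lra.
have hc : c ^+ 2 = c' ^+ 2 by lra.
have hab : a * b = a' * b' by lra.
have hac : a * c = a' * c' by lra.
have hbc : b * c = b' * c' by lra.
case: (pm_lemma ha hb hc hab hac hbc) => [[h1 [h2 h3]]|[h1 [h2 h3]]]; [left|right];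
  apply: rv3_eq; rewrite ?mxE; by [].
Qed.

End Main4.

Section Main5.
Variable R : realType.
Local Notation C := (cpx R).
Local Notation M2 := 'M[cpx R]_2.
Local Notation Mq := (@Mq R).
Local Notation qn := (@qn R).
Local Notation I0 := (@I0 R).
Local Notation J0 := (@J0 R).
Local Notation cj := (@cj R).
Local Notation HomT := (Defs.Hom R).
Local Notation Re := (@complex.Re R).

Lemma conj_qpiP (x y : HomT) : qpi (@conj_rel R) x = qpi (@conj_rel R) y <-> conj_rel x y.
Proof. exact: (qpi_eqP (@conj_refl R) (@conj_sym R) (@conj_trans R)). Qed.

Lemma anti_qpiP (v w : S2 R) : qpi (@antipodal_rel R) v = qpi (@antipodal_rel R) w <-> antipodal_rel v w.
Proof. exact: (qpi_eqP (@anti_refl R) (@anti_sym R) (@anti_trans R)). Qed.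

Lemma phiS_inj (v w : S2 R) : phiS v = phiS w -> antipodal_rel v w.
Proof.
move=> /(congr1 set_val) e.
change (qpi (@conj_rel R) (phiH v) = qpi (@conj_rel R) (phiH w)) in e.
move/conj_qpiP/Fh_inv: e; rewrite !Fh_phi => e.
exact: (Gv_eqs e (S2_nv v) (S2_nv w)).
Qed.

Lemma zcN k (z : 'rV[R]_3) : zc k (- z) = - zc k z.
Proof. by rewrite /zc mxE. Qed.

Lemma phiS_anti (v w : S2 R) : antipodal_rel v w -> phiS v = phiS w.
Proof.
case=> e.
  by have -> : w = v by apply: sval_inj.
apply: sval_inj.
change (qpi (@conj_rel R) (phiH v) = qpi (@conj_rel R) (phiH w)).
congr qpi; apply: esym.
apply: sval_inj; rewrite /= /phiK; congr (_, _, _, _); apply: sval_inj => /=.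
- by rewrite /RjV e !zcN Rj_opp.
- by rewrite /RiV e !zcN Ri_opp.
Qed.

Lemma phiS_surj (q : SpecialSubspace R) : exists v, phiS v = q.
Proof.
case: q => Q hQ.
have [x [sx eQ]] := set_mem hQ.
case: sx => k /= [hc hk e3 e4].
have sg : SU2_set (g1 (set_val x)) := set_valP (set_val x).1.1.1.
have sh : SU2_set (h1 (set_val x)) := set_valP (set_val x).1.1.2.
have sk : SU2_set (set_val k) := set_valP k.
have [m [v1 [v2 [v3 [sm hv e1 e2 [f3 f4]]]]]] := special_norm sg sh sk hc hk.
have hS : S2_set (\row_(i < 3) nth 0 [:: v1; v2; v3] i).
  by rewrite /S2_set /= sum3 !mxE /= -hv /qn expr0n add0r.
exists (exist (fun z => z \in S2_set (R:=R)) _ (mem_set hS)).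
apply: sval_inj => /=.
change (qpi (@conj_rel R) (phiH (exist (fun z => z \in S2_set (R:=R)) _ (mem_set hS))) = Q).
rewrite eQ; apply/esym/conj_qpiP.
exists (exist _ m (mem_set sm)) => /=.
rewrite -/(cj _ _) -/(cj _ _) -/(cj _ _) -/(cj _ _).
have ez : forall i, zc i (\row_(i < 3) nth 0 [:: v1; v2; v3] i) = nth 0 [:: v1; v2; v3] i.
  by move=> i; rewrite /zc mxE.
split.
- by rewrite e1.
- by rewrite e2.
- rewrite e3 f3; change (RjV (\row_(i < 3) nth 0 [:: v1; v2; v3] i) = Rj v1 v2 v3).
  by rewrite /RjV !ez.
- rewrite e4 f4; change (RiV (\row_(i < 3) nth 0 [:: v1; v2; v3] i) = Ri v1 v2 v3).
  by rewrite /RiV !ez.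
Qed.

End Main5.

Section Main6.
Variable R : realType.
Local Notation HomT := (Defs.Hom R).
Local Notation Sp := (SpecialSubspace R).
Local Notation qA := (qpi (@antipodal_rel R)).
Local Notation qC := (qpi (@conj_rel R)).
Local Notation Gv := (@Gv R).

Definition Phi (A : RP2 R) : Sp := phiS (qrep A).

Lemma Phi_qpi (v : S2 R) : Phi (qA v) = phiS v.
Proof.
apply: esym; apply: phiS_anti.
exact: (qrep_rel (@anti_refl R) (@anti_sym R) (@anti_trans R)).
Qed.

Lemma Phi_cont : continuous Phi.
Proof.
apply: qspace_cont; apply: (cont_ext (f := @phiS R)); first by move=> v; rewrite /= Phi_qpi.
exact: phiS_cont.
Qed.

Definition psv (q : Sp) : S2 R := sval (cid (phiS_surj q)).
Lemma psvE q : phiS (psv q) = q.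
Proof. by rewrite /psv; case: (cid _). Qed.

Definition Psi (q : Sp) : RP2 R := qA (psv q).

Lemma PsiK : cancel Psi Phi.
Proof. by move=> q; rewrite /Psi Phi_qpi psvE. Qed.

Lemma PhiK : cancel Phi Psi.
Proof.
move=> A; rewrite /Psi.
have h : phiS (psv (Phi A)) = phiS (qrep A) by rewrite psvE.
by move/phiS_inj/anti_qpiP: h ->; rewrite qrepK.
Qed.

Definition Fbar (q : Moduli R) : 'rV[R]_5 := Fh (qrep q).
Lemma Fbar_qpi (x : HomT) : Fbar (qC x) = Fh x.
Proof.
apply: esym; apply: Fh_inv.
exact: (qrep_rel (@conj_refl R) (@conj_sym R) (@conj_trans R)).
Qed.
Lemma Fbar_cont : continuous Fbar.
Proof.
apply: qspace_cont; apply: (cont_ext (f := @Fh R)); first by move=> x; rewrite /= Fbar_qpi.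
exact: Fh_cont.
Qed.

Definition Fhat (q : Sp) := Fbar (set_val q).
Lemma Fhat_cont : continuous Fhat.
Proof. exact: (cont_comp (@set_val_cont _ _) Fbar_cont). Qed.
Lemma Fhat_phi v : Fhat (phiS v) = Gv (set_val v).
Proof. by rewrite /Fhat -Fh_phi -Fbar_qpi. Qed.

Lemma S2_closed : closed (@S2_set R).
Proof.
have hc : continuous (fun z : 'rV[R]_3 => \sum_(i < 3) z 0 i ^+ 2).
  apply: (cont_ext (f := fun z : 'rV[R]_3 => z 0 o0 ^+ 2 + z 0 o1 ^+ 2 + z 0 o2 ^+ 2)).
    by move=> z; rewrite sum3.
  by apply: rD_cont; [apply: rD_cont|]; apply: rX2_cont; apply: mx_entry_cont.
have hpre := (continuous_closedP _).1 hc _ (@closed_eq R 1).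
have -> : @S2_set R = (fun z : 'rV[R]_3 => \sum_(i < 3) z 0 i ^+ 2) @^-1` [set x | x = 1].
  by apply/seteqP; split => z.
exact: hpre.
Qed.

Lemma S2_box (z : 'rV[R]_3) : S2_set z -> forall i, `[-1, 1]%classic (z ord0 i).
Proof.
rewrite /S2_set /= sum3 => h i.
have hi : z ord0 i ^+ 2 <= 1.
  have h0 := sqr_ge0 (z 0 o0); have h1 := sqr_ge0 (z 0 o1); have h2 := sqr_ge0 (z 0 o2).
  by case: (ord3 i) => ->; lra.
rewrite /= in_itv /=; apply/andP; split; nra.
Qed.

Lemma Psi_cont : continuous Psi.
Proof.
apply/continuous_closedP => Cl hCl.
have hE : closed (qA @^-1` Cl) := (continuous_closedP _).1 (@qpi_cont _ _) _ hCl.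
have oE : open (~` (qA @^-1` Cl)) := closed_openC hE.
case: oE => O oO eO.
pose D := [set z : 'rV[R]_3 | S2_set z /\ ~ O z].
have cD : closed D by apply: closedI; [exact: S2_closed | exact: open_closedC].
have kD : compact D.
  apply: (subclosed_compact cD (rV_compact (fun=> @segment_compact R (-1) 1))).
  by move=> z [hz _]; exact: S2_box.
have kK : compact (Gv @` D).
  by apply: continuous_compact => //; apply: continuous_subspaceT; exact: Gv_cont.
have cK : closed (Gv @` D) by apply: compact_closed => //; exact: norm_hausdorff.
have -> : Psi @^-1` Cl = Fhat @^-1` (Gv @` D).
  apply/seteqP; split => q /=.
  - move=> hq; exists (set_val (psv q)); last by rewrite -Fhat_phi psvE.
    split; first exact: set_valP.
    move=> hO.
    have : (~` (qA @^-1` Cl)) (psv q) by rewrite -eO.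
    by apply.
  - case=> z [hz hO] eG.
    pose p : S2 R := exist (fun z => z \in S2_set (R:=R)) z (mem_set hz).
    have hp : Cl (qA p).
      apply: contrapT => hn.
      have : (~` (qA @^-1` Cl)) p by [].
      by rewrite -eO.
    have e : Gv (set_val p) = Gv (set_val (psv q)) by rewrite -[RHS]Fhat_phi psvE -eG.
    have hanti : antipodal_rel p (psv q) := Gv_eqs e (S2_nv p) (S2_nv (psv q)).
    by move/anti_qpiP: hanti; rewrite /Psi => <-.
exact: (continuous_closedP _).1 Fhat_cont _ cK.
Qed.

End Main6.

Theorem mainTheorem13 (R : realType) :
  homeomorphic (SpecialSubspace R) (RP2 R).
Proof.
exists (@Psi R), (@Phi R); split.
- exact: PsiK.
- exact: PhiK.
- exact: Psi_cont.
- exact: Phi_cont.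
Qed.
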